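(* Let $k\ge 2$ and let $p,q$ be real polynomials with $\deg p=k$, $\deg q=k-1$, whose roots are real, simple and strictly interlacing; let $R=q/p$, viewed as a holomorphic map $\mathbb{C}P^1\to\mathbb{C}P^1$. For $\alpha\in\mathbb{R}$ let $p_1(\alpha)<\dots<p_k(\alpha)$ be the (real, simple) roots of $p+\alpha q$, and for $j=1,\dots,k-1$ let $D_j(\alpha)$ be the open disk having $[p_j(\alpha),p_{j+1}(\alpha)]$ as a diameter. Then for every $\alpha\in\mathbb{R}$ and every $j\in\{1,\dots,k-1\}$, $D_j(\alpha)$ is a maximal real univalent disk of $R$: $R$ is injective on $D_j(\alpha)$, and there is no real open disk in $\mathbb{C}P^1$ strictly containing $D_j(\alpha)$ on which $R$ is injective.
   Context: A disk in $\mathbb{C}P^1$ (an open disk, an open half-plane, or the complement of a closed disk together with $\infty$) is called real if it is invariant under complex conjugation. ''Strictly interlacing'' means $p_1<q_1<p_2<\dots<q_{k-1}<p_k$ for the roots $p_i$ of $p$ and $q_i$ of $q$. *)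

(* Defs.v *)
From Stdlib Require Import Reals List.
Open Scope R_scope.

Record C := mkC { re : R; im : R }.
Definition Cadd (z w : C) : C := mkC (re z + re w) (im z + im w).
Definition Csub (z w : C) : C := mkC (re z - re w) (im z - im w).
Definition Cmul (z w : C) : C :=
  mkC (re z * re w - im z * im w) (re z * im w + im z * re w).
Definition Cconj (z : C) : C := mkC (re z) (- im z).
Definition Cnorm2 (z : C) : R := re z * re z + im z * im z.
Definition Cinv (z : C) : C := mkC (re z / Cnorm2 z) (- im z / Cnorm2 z).
Definition Cdiv (z w : C) : C := Cmul z (Cinv w).
Definition RtoC (x : R) : C := mkC x 0.

(* ---------- the Riemann sphere CP^1 = C ∪ {∞}, with None = ∞ ---------- *)
Definition CP1 := option C.
Definition CP1conj (x : CP1) : CP1 :=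
  match x with Some z => Some (Cconj z) | None => None end.

(* ---------- real polynomials: coefficient lists, lowest degree first ---------- *)
Definition rpoly := list R.
Fixpoint peval (p : rpoly) (x : R) : R :=
  match p with nil => 0 | a :: p' => a + x * peval p' x end.
Fixpoint pevalC (p : rpoly) (z : C) : C :=
  match p with nil => RtoC 0 | a :: p' => Cadd (RtoC a) (Cmul z (pevalC p' z)) end.
(* leading coefficient (meaningful for normalized lists) *)
Definition lead (p : rpoly) : R := last p 0.
Definition has_degree (p : rpoly) (k : nat) : Prop :=
  length p = S k /\ lead p <> 0.

Definition sorted_roots (f : R -> R) (n : nat) (rs : list R) : Prop :=
  length rs = n /\
  (forall i, (S i < n)%nat -> nth i rs 0 < nth (S i) rs 0) /\
  (forall i, (i < n)%nat -> f (nth i rs 0) = 0).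

Definition strictly_interlacing (p q : rpoly) (k : nat) : Prop :=
  exists ps qs,
    sorted_roots (peval p) k ps /\ sorted_roots (peval q) (k - 1) qs /\
    forall i, (S i < k)%nat ->
      nth i ps 0 < nth i qs 0 /\ nth i qs 0 < nth (S i) ps 0.

(* The rational function q/p as a map CP^1 -> CP^1 (p, q normalized, coprime). *)
Definition ratmap (q p : rpoly) (x : CP1) : CP1 :=
  match x with
  | Some z =>
      if Req_EM_T (Cnorm2 (pevalC p z)) 0 then None
      else Some (Cdiv (pevalC q z) (pevalC p z))
  | None =>
      if Nat.ltb (length q) (length p) then Some (RtoC 0)
      else if Nat.eqb (length q) (length p) then Some (RtoC (lead q / lead p))
      else None
  end.

Definition open_disk (c : C) (r : R) : CP1 -> Prop :=
  fun x => match x with Some z => Cnorm2 (Csub z c) < r * r | None => False end.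
Definition open_halfplane (a1 a2 t : R) : CP1 -> Prop :=
  fun x => match x with Some z => a1 * re z + a2 * im z > t | None => False end.
Definition outer_disk (c : C) (r : R) : CP1 -> Prop :=
  fun x => match x with Some z => Cnorm2 (Csub z c) > r * r | None => True end.

Definition is_disk (S : CP1 -> Prop) : Prop :=
  (exists c r, 0 < r /\ forall x, S x <-> open_disk c r x) \/
  (exists a1 a2 t, (a1 <> 0 \/ a2 <> 0) /\ forall x, S x <-> open_halfplane a1 a2 t x) \/
  (exists c r, 0 < r /\ forall x, S x <-> outer_disk c r x).

Definition is_real_disk (S : CP1 -> Prop) : Prop :=
  is_disk S /\ forall x, S x <-> S (CP1conj x).

Definition injective_on (f : CP1 -> CP1) (S : CP1 -> Prop) : Prop :=
  forall x y, S x -> S y -> f x = f y -> x = y.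

Definition maximal_real_univalent_disk (f : CP1 -> CP1) (D : CP1 -> Prop) : Prop :=
  is_real_disk D /\ injective_on f D /\
  ~ (exists S, is_real_disk S /\ (forall x, D x -> S x) /\ (exists x, S x /\ ~ D x)
              /\ injective_on f S).

Definition diam_disk (a b : R) : CP1 -> Prop :=
  open_disk (RtoC ((a + b) / 2)) ((b - a) / 2).

(* Main.v *)
Require Import Defs.
From Stdlib Require Import Reals List Lra Lia Psatz IndefiniteDescription.
Open Scope R_scope.
Import ListNotations.
Import Defs.

Ltac Cunf := unfold Cdiv, Cinv, Cadd, Csub, Cmul, Cconj, Cnorm2, RtoC in *; simpl in *.


Lemma C_ext : forall z w, re z = re w -> im z = im w -> z = w.
Proof. intros [a b] [c d]; simpl; intros; subst; reflexivity. Qed.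

Ltac Cring := apply C_ext; Cunf; simpl; ring.

Lemma pevalC_real : forall l x, pevalC l (RtoC x) = RtoC (peval l x).
Proof.
  induction l as [|a l IH]; intros x; simpl; [reflexivity|].
  rewrite IH. apply C_ext; unfold Cadd, Cmul, RtoC; simpl; ring.
Qed.

Fixpoint quot (r : R) (l : rpoly) : rpoly :=
  match l with
  | nil => nil
  | a :: l' => match l' with nil => nil | _ => peval l' r :: quot r l' end
  end.

Lemma quot_spec : forall r l z,
  pevalC l z = Cadd (RtoC (peval l r)) (Cmul (Csub z (RtoC r)) (pevalC (quot r l) z)).
Proof.
  intros r; induction l as [|a l IH]; intros z.
  - simpl. destruct z; apply C_ext; Cunf; ring.
  - destruct l as [|b l'].
    + simpl. destruct z; apply C_ext; Cunf; ring.
    + change (pevalC (a :: b :: l') z) with (Cadd (RtoC a) (Cmul z (pevalC (b :: l') z))).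
      change (peval (a :: b :: l') r) with (a + r * peval (b :: l') r).
      change (quot r (a :: b :: l')) with (peval (b :: l') r :: quot r (b :: l')).
      change (pevalC (peval (b :: l') r :: quot r (b :: l')) z) with
        (Cadd (RtoC (peval (b :: l') r)) (Cmul z (pevalC (quot r (b :: l')) z))).
      rewrite (IH z).
      generalize (pevalC (quot r (b :: l')) z) (peval (b :: l') r).
      intros [u1 u2] B. destruct z. apply C_ext; Cunf; ring.
Qed.

Lemma quot_spec_real : forall r l x,
  peval l x = peval l r + (x - r) * peval (quot r l) x.
Proof.
  intros r l x. pose proof (quot_spec r l (RtoC x)) as H.
  rewrite !pevalC_real in H. apply (f_equal re) in H. Cunf. lra.
Qed.

Lemma length_quot : forall r l, length (quot r l) = pred (length l).
Proof.
  intros r; induction l as [|a l IH]; [reflexivity|].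
  destruct l as [|b l']; [reflexivity|].
  change (length (peval (b :: l') r :: quot r (b :: l')) = length (b :: l')).
  change (S (length (quot r (b :: l'))) = S (length l')).
  rewrite IH. reflexivity.
Qed.

Lemma lead_cons : forall a l, l <> nil -> lead (a :: l) = lead l.
Proof. intros a l H; unfold lead; destruct l; [congruence|reflexivity]. Qed.

Lemma lead_quot : forall r l, (2 <= length l)%nat -> lead (quot r l) = lead l.
Proof.
  intros r; induction l as [|a l IH]; intros H; [simpl in H; lia|].
  destruct l as [|b l']; [simpl in H; lia|].
  change (quot r (a :: b :: l')) with (peval (b :: l') r :: quot r (b :: l')).
  rewrite (lead_cons a (b :: l')) by discriminate.
  destruct l' as [|c l''].
  - simpl. unfold lead; simpl. ring.
  - rewrite lead_cons.
    + apply IH. simpl; lia.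
    + intro E. apply (f_equal (@length R)) in E. rewrite length_quot in E. simpl in E. lia.
Qed.

Lemma quot_root : forall r l r', peval l r = 0 -> peval l r' = 0 -> r' <> r ->
  peval (quot r l) r' = 0.
Proof.
  intros r l r' H1 H2 H3. pose proof (quot_spec_real r l r') as E.
  rewrite H1, H2 in E. assert (r' - r <> 0) by lra.
  assert (E2 : (r' - r) * peval (quot r l) r' = 0) by lra.
  apply Rmult_integral in E2 as [?|?]; [lra|assumption].
Qed.



Fixpoint cprod (l : list R) (z : C) : C :=
  match l with nil => RtoC 1 | r :: l' => Cmul (Csub z (RtoC r)) (cprod l' z) end.
Fixpoint rprod (t : R) (l : list R) : R :=
  match l with nil => 1 | r :: l' => (t - r) * rprod t l' end.

Lemma cprod_real : forall l t, cprod l (RtoC t) = RtoC (rprod t l).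
Proof.
  induction l as [|a l IH]; intros t; simpl; [reflexivity|].
  rewrite IH. apply C_ext; Cunf; ring.
Qed.

Lemma rprod_app : forall t l1 l2, rprod t (l1 ++ l2) = rprod t l1 * rprod t l2.
Proof. intros t; induction l1; intros; simpl; [ring|rewrite IHl1; ring]. Qed.

Lemma cprod_app : forall z l1 l2, cprod (l1 ++ l2) z = Cmul (cprod l1 z) (cprod l2 z).
Proof.
  intros z; induction l1; intros; simpl.
  - destruct (cprod l2 z); apply C_ext; Cunf; ring.
  - rewrite IHl1. destruct (cprod l1 z), (cprod l2 z), z; apply C_ext; Cunf; ring.
Qed.

Lemma rprod_zero : forall t l, rprod t l = 0 -> In t l.
Proof.
  intros t; induction l as [|a l IH]; simpl; intros H; [lra|].
  apply Rmult_integral in H as [H|H]; [left; lra|right; auto].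
Qed.

Lemma rprod_In : forall t l, In t l -> rprod t l = 0.
Proof.
  intros t; induction l as [|a l IH]; simpl; intros H; [contradiction|].
  destruct H as [H|H]; [subst; ring|rewrite IH by auto; ring].
Qed.

Lemma rprod_nz : forall t l, ~ In t l -> rprod t l <> 0.
Proof. intros t l H E; apply H, rprod_zero, E. Qed.

Lemma divide_roots : forall n m l rs, length l = S (n + m) -> length rs = n -> NoDup rs ->
  (forall r, In r rs -> peval l r = 0) ->
  exists g, length g = S m /\ lead g = lead l /\
    forall z, pevalC l z = Cmul (cprod rs z) (pevalC g z).
Proof.
  induction n as [|n IH]; intros m l rs Hl Hrs Hnd Hr.
  - destruct rs; [|simpl in Hrs; lia]. exists l; split; [exact Hl|split; [reflexivity|]].
    intros z; simpl. destruct (pevalC l z); apply C_ext; Cunf; ring.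
  - destruct rs as [|r rs']; [simpl in Hrs; lia|]. simpl in Hrs.
    inversion Hnd; subst.
    destruct (IH m (quot r l) rs') as [g [Hg1 [Hg2 Hg3]]].
    + rewrite length_quot, Hl; reflexivity.
    + lia.
    + assumption.
    + intros r' Hr'. apply quot_root; [apply Hr; left; auto|apply Hr; right; auto|].
      intro; subst; contradiction.
    + exists g; split; [exact Hg1|split].
      * rewrite Hg2. apply lead_quot. lia.
      * intros z. rewrite (quot_spec r l z), Hg3, (Hr r (or_introl eq_refl)).
        simpl. destruct (cprod rs' z), (pevalC g z), z; apply C_ext; Cunf; ring.
Qed.

Lemma factor : forall n l rs, length l = S n -> length rs = n -> NoDup rs ->
  (forall r, In r rs -> peval l r = 0) ->
  forall z, pevalC l z = Cmul (cprod rs z) (RtoC (lead l)).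
Proof.
  intros n l rs H1 H2 H3 H4 z.
  destruct (divide_roots n 0 l rs) as [g [G1 [G2 G3]]]; try rewrite Nat.add_0_r; auto.
  rewrite G3, <- G2. destruct g as [|c [|]]; simpl in G1; try lia.
  f_equal. unfold lead; simpl. apply C_ext; Cunf; ring.
Qed.

Lemma factor_real : forall n l rs, length l = S n -> length rs = n -> NoDup rs ->
  (forall r, In r rs -> peval l r = 0) ->
  forall x, peval l x = rprod x rs * lead l.
Proof.
  intros n l rs H1 H2 H3 H4 x.
  pose proof (factor n l rs H1 H2 H3 H4 (RtoC x)) as E.
  rewrite pevalC_real, cprod_real in E. apply (f_equal re) in E. Cunf. lra.
Qed.

Lemma vanish : forall n l rs, (length l <= n)%nat -> length rs = n -> NoDup rs ->
  (forall r, In r rs -> peval l r = 0) -> forall z, pevalC l z = RtoC 0.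
Proof.
  induction n as [|n IH]; intros l rs Hl Hrs Hnd Hr z.
  - destruct l; [reflexivity|simpl in Hl; lia].
  - destruct rs as [|r rs']; [simpl in Hrs; lia|]. simpl in Hrs. inversion Hnd; subst.
    rewrite (quot_spec r l z), (Hr r (or_introl eq_refl)).
    rewrite (IH (quot r l) rs').
    + apply C_ext; Cunf; ring.
    + rewrite length_quot; lia.
    + lia.
    + assumption.
    + intros r' Hr'. apply quot_root; [apply Hr; left; auto|apply Hr; right; auto|].
      intro; subst; contradiction.
Qed.

Definition PolyLe (n : nat) (f : C -> C) : Prop :=
  exists l, (length l <= n)%nat /\ forall z, f z = pevalC l z.

Fixpoint padd (l m : list R) : list R :=
  match l, m with
  | nil, _ => m
  | _, nil => l
  | a :: l', b :: m' => (a + b) :: padd l' m'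
  end.
Definition pscale (c : R) (l : list R) : list R := map (Rmult c) l.

Lemma pevalC_padd : forall l m z, pevalC (padd l m) z = Cadd (pevalC l z) (pevalC m z).
Proof.
  induction l as [|a l IH]; intros m z.
  - simpl. destruct (pevalC m z); apply C_ext; Cunf; ring.
  - destruct m as [|b m].
    + simpl. destruct (pevalC l z); apply C_ext; Cunf; ring.
    + simpl. rewrite IH. destruct (pevalC l z), (pevalC m z), z; apply C_ext; Cunf; ring.
Qed.

Lemma peval_padd : forall l m x, peval (padd l m) x = peval l x + peval m x.
Proof.
  induction l as [|a l IH]; intros m x; [simpl; ring|].
  destruct m as [|b m]; simpl; [ring|rewrite IH; ring].
Qed.

Lemma length_padd : forall l m, length (padd l m) = Nat.max (length l) (length m).
Proof.
  induction l as [|a l IH]; intros m; [reflexivity|].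
  destruct m as [|b m]; simpl; [reflexivity|rewrite IH; reflexivity].
Qed.

Lemma lead_padd : forall l m, (length m < length l)%nat -> lead (padd l m) = lead l.
Proof.
  induction l as [|a l IH]; intros m H; [simpl in H; lia|].
  destruct m as [|b m]; [reflexivity|]. simpl in H.
  change (padd (a :: l) (b :: m)) with ((a + b) :: padd l m).
  destruct l as [|c l']; [simpl in H; lia|].
  rewrite lead_cons, lead_cons by (try discriminate; destruct m; discriminate).
  apply IH. lia.
Qed.

Lemma pevalC_pscale : forall c l z, pevalC (pscale c l) z = Cmul (RtoC c) (pevalC l z).
Proof.
  intros c; induction l as [|a l IH]; intros z; simpl.
  - apply C_ext; Cunf; ring.
  - change (pevalC (pscale c l) z) with (pevalC (map (Rmult c) l) z) in IH.
    rewrite IH. destruct (pevalC l z), z; apply C_ext; Cunf; ring.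
Qed.

Lemma peval_pscale : forall c l x, peval (pscale c l) x = c * peval l x.
Proof.
  intros c; induction l as [|a l IH]; intros x; simpl; [ring|].
  change (peval (pscale c l) x) with (peval (map (Rmult c) l) x) in IH.
  rewrite IH; ring.
Qed.

Lemma length_pscale : forall c l, length (pscale c l) = length l.
Proof. intros; apply length_map. Qed.

Lemma PolyLe_ext : forall n f g, (forall z, f z = g z) -> PolyLe n f -> PolyLe n g.
Proof. intros n f g E [l [H1 H2]]; exists l; split; auto; intros z; rewrite <- E; auto. Qed.

Lemma PolyLe_mono : forall n m f, (n <= m)%nat -> PolyLe n f -> PolyLe m f.
Proof. intros n m f H [l [H1 H2]]; exists l; split; [lia|auto]. Qed.

Lemma PolyLe_zero : forall n, PolyLe n (fun _ => RtoC 0).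
Proof. intros n; exists nil; split; [simpl; lia|reflexivity]. Qed.

Lemma PolyLe_add : forall n f g, PolyLe n f -> PolyLe n g -> PolyLe n (fun z => Cadd (f z) (g z)).
Proof.
  intros n f g [l [H1 H2]] [m [H3 H4]]. exists (padd l m); split.
  - rewrite length_padd; lia.
  - intros z; rewrite pevalC_padd, H2, H4; reflexivity.
Qed.

Lemma PolyLe_scale : forall n c f, PolyLe n f -> PolyLe n (fun z => Cmul (RtoC c) (f z)).
Proof.
  intros n c f [l [H1 H2]]. exists (pscale c l); split.
  - rewrite length_pscale; lia.
  - intros z; rewrite pevalC_pscale, H2; reflexivity.
Qed.

Lemma PolyLe_lin : forall n r f, PolyLe n f -> PolyLe (S n) (fun z => Cmul (Csub z (RtoC r)) (f z)).
Proof.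
  intros n r f [l [H1 H2]]. exists (padd (pscale (- r) l) (0 :: l)); split.
  - rewrite length_padd, length_pscale; simpl; lia.
  - intros z; rewrite pevalC_padd, pevalC_pscale, H2. simpl.
    destruct (pevalC l z), z; apply C_ext; Cunf; ring.
Qed.

Lemma PolyLe_cprod : forall l, PolyLe (S (length l)) (cprod l).
Proof.
  induction l as [|a l IH].
  - exists [1]; split; [simpl; lia|]. intros z; simpl. destruct z; apply C_ext; Cunf; ring.
  - simpl. apply (PolyLe_lin _ a (cprod l)), IH.
Qed.

Fixpoint Csumn (f : nat -> C) (n : nat) : C :=
  match n with O => RtoC 0 | S n' => Cadd (Csumn f n') (f n') end.
Fixpoint Rsumn (f : nat -> R) (n : nat) : R :=
  match n with O => 0 | S n' => Rsumn f n' + f n' end.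

Lemma PolyLe_sum : forall n f m, (forall i, (i < m)%nat -> PolyLe n (f i)) ->
  PolyLe n (fun z => Csumn (fun i => f i z) m).
Proof.
  intros n f m H; induction m as [|m IH]; simpl.
  - apply PolyLe_zero.
  - apply (PolyLe_add n (fun z => Csumn (fun i => f i z) m) (f m)); auto.
Qed.

Lemma vanish_f : forall n f rs, PolyLe n f -> length rs = n -> NoDup rs ->
  (forall r, In r rs -> f (RtoC r) = RtoC 0) -> forall z, f z = RtoC 0.
Proof.
  intros n f rs [l [H1 H2]] H3 H4 H5 z. rewrite H2.
  apply (vanish n l rs); auto. intros r Hr. specialize (H5 r Hr).
  rewrite H2, pevalC_real in H5. apply (f_equal re) in H5. simpl in H5. exact H5.
Qed.

Lemma Csumn_ext : forall f g n, (forall i, (i < n)%nat -> f i = g i) -> Csumn f n = Csumn g n.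
Proof.
  intros f g n H; induction n as [|n IH]; simpl; [reflexivity|].
  rewrite IH by (intros; apply H; lia); rewrite H by lia; reflexivity.
Qed.

Lemma Rsumn_ext : forall f g n, (forall i, (i < n)%nat -> f i = g i) -> Rsumn f n = Rsumn g n.
Proof.
  intros f g n H; induction n as [|n IH]; simpl; [reflexivity|].
  rewrite IH by (intros; apply H; lia); rewrite H by lia; reflexivity.
Qed.

Lemma Csumn_single : forall f n m, (m < n)%nat ->
  (forall i, (i < n)%nat -> i <> m -> f i = RtoC 0) -> Csumn f n = f m.
Proof.
  intros f n m Hm H. induction n as [|n IH]; [lia|]. simpl.
  destruct (Nat.eq_dec m n) as [->|Hne].
  - rewrite (Csumn_ext f (fun _ => RtoC 0)).
    + assert (Z : forall k, Csumn (fun _ => RtoC 0) k = RtoC 0)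
        by (induction k; simpl; [reflexivity|rewrite IHk; apply C_ext; Cunf; ring]).
      rewrite Z. destruct (f n); apply C_ext; Cunf; ring.
    + intros i Hi; apply H; lia.
  - rewrite IH by (try lia; intros; apply H; lia).
    rewrite (H n) by lia. destruct (f m); apply C_ext; Cunf; ring.
Qed.

Lemma re_Csumn : forall f n, re (Csumn f n) = Rsumn (fun i => re (f i)) n.
Proof. intros f n; induction n; simpl; [reflexivity|rewrite <- IHn; reflexivity]. Qed.
Lemma im_Csumn : forall f n, im (Csumn f n) = Rsumn (fun i => im (f i)) n.
Proof. intros f n; induction n; simpl; [reflexivity|rewrite <- IHn; reflexivity]. Qed.

Lemma Cmul_Csumn : forall w f n, Cmul w (Csumn f n) = Csumn (fun i => Cmul w (f i)) n.
Proof.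
  intros w f n; induction n; simpl.
  - destruct w; apply C_ext; Cunf; ring.
  - rewrite <- IHn. destruct w, (Csumn f n), (f n); apply C_ext; Cunf; ring.
Qed.

Lemma Csub_Csumn : forall f g n, Csub (Csumn f n) (Csumn g n) = Csumn (fun i => Csub (f i) (g i)) n.
Proof.
  intros f g n; induction n; simpl.
  - apply C_ext; Cunf; ring.
  - rewrite <- IHn. destruct (Csumn f n), (Csumn g n), (f n), (g n); apply C_ext; Cunf; ring.
Qed.

Lemma Rsumn_neg : forall f n j, (forall i, (i < n)%nat -> f i <= 0) -> (j < n)%nat -> f j < 0 ->
  Rsumn f n < 0.
Proof.
  intros f n j H Hj Hf. induction n as [|n IH]; [lia|]. simpl.
  assert (Hle : forall m, (m <= n)%nat -> Rsumn f m <= 0).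
  { induction m; intros; simpl; [lra|]. pose proof (H m ltac:(lia)). pose proof (IHm ltac:(lia)). lra. }
  destruct (Nat.eq_dec j n) as [->|Hne].
  - pose proof (Hle n (le_n n)); lra.
  - pose proof (IH ltac:(intros; apply H; lia) ltac:(lia)). pose proof (H n ltac:(lia)). lra.
Qed.

Lemma Rsumn_pos : forall f n j, (forall i, (i < n)%nat -> 0 <= f i) -> (j < n)%nat -> 0 < f j ->
  0 < Rsumn f n.
Proof.
  intros f n j H Hj Hf.
  assert (E : forall m, Rsumn (fun i => - f i) m = - Rsumn f m)
    by (induction m; simpl; [ring|rewrite IHm; ring]).
  pose proof (Rsumn_neg (fun i => - f i) n j) as X. rewrite E in X.
  cut (- Rsumn f n < 0); [lra|]. apply X; auto; intros; [pose proof (H i H0)|]; lra.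
Qed.

Lemma Rsumn_scal : forall c f n, Rsumn (fun i => c * f i) n = c * Rsumn f n.
Proof. intros c f n; induction n; simpl; [ring|rewrite IHn; ring]. Qed.



Definition rm (i : nat) (l : list R) := firstn i l ++ skipn (S i) l.

Lemma rm_app : forall l1 x l2, rm (length l1) (l1 ++ x :: l2) = l1 ++ l2.
Proof.
  induction l1 as [|a l1 IH]; intros x l2; [reflexivity|].
  unfold rm in *; simpl. rewrite IH. reflexivity.
Qed.

Lemma rm_split : forall i l, (i < length l)%nat ->
  exists l1 l2, l = l1 ++ nth i l 0 :: l2 /\ length l1 = i /\ rm i l = l1 ++ l2.
Proof.
  intros i l H. destruct (nth_split l 0 H) as [l1 [l2 [E1 E2]]].
  exists l1, l2; split; [exact E1|split; [exact E2|]].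
  rewrite <- E2. rewrite E1 at 1. apply rm_app.
Qed.

Lemma length_rm : forall i l, (i < length l)%nat -> length (rm i l) = pred (length l).
Proof.
  intros i l H. destruct (rm_split i l H) as [l1 [l2 [E1 [E2 E3]]]].
  rewrite E3. rewrite E1. rewrite !length_app. simpl. lia.
Qed.

Lemma In_rm : forall i m l, (i < length l)%nat -> (m < length l)%nat -> m <> i ->
  In (nth m l 0) (rm i l).
Proof.
  intros i m l Hi Hm Hne. destruct (rm_split i l Hi) as [l1 [l2 [E1 [E2 E3]]]].
  rewrite E3. rewrite E1. apply in_or_app.
  destruct (Nat.lt_ge_cases m i) as [Hlt|Hge].
  - left. rewrite app_nth1 by lia. apply nth_In; lia.
  - right. rewrite app_nth2 by lia. replace (m - length l1)%nat with (S (m - S i)) by lia.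
    simpl. apply nth_In. rewrite E1, length_app in Hm. simpl in Hm. lia.
Qed.

Lemma notIn_rm : forall i l, NoDup l -> (i < length l)%nat -> ~ In (nth i l 0) (rm i l).
Proof.
  intros i l Hnd Hi. destruct (rm_split i l Hi) as [l1 [l2 [E1 [E2 E3]]]].
  rewrite E3. rewrite E1 in Hnd. eapply NoDup_remove_2; eauto.
Qed.

Lemma cprod_rm : forall i l z, (i < length l)%nat ->
  cprod l z = Cmul (Csub z (RtoC (nth i l 0))) (cprod (rm i l) z).
Proof.
  intros i l z Hi. destruct (rm_split i l Hi) as [l1 [l2 [E1 [E2 E3]]]].
  rewrite E3. rewrite E1 at 1. rewrite !cprod_app. simpl.
  destruct (cprod l1 z), (cprod l2 z), z; apply C_ext; Cunf; ring.
Qed.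

Lemma rprod_rm : forall i l t, (i < length l)%nat ->
  rprod t l = (t - nth i l 0) * rprod t (rm i l).
Proof.
  intros i l t Hi. destruct (rm_split i l Hi) as [l1 [l2 [E1 [E2 E3]]]].
  rewrite E3. rewrite E1 at 1. rewrite !rprod_app. simpl. ring.
Qed.

Definition ssorted (l : list R) (n : nat) := forall i, (S i < n)%nat -> nth i l 0 < nth (S i) l 0.

Lemma sorted_lt : forall l n i j, ssorted l n -> (i < j)%nat -> (j < n)%nat -> nth i l 0 < nth j l 0.
Proof.
  intros l n i j H Hij Hj. induction j as [|j IH]; [lia|].
  destruct (Nat.eq_dec i j) as [->|Hne]; [apply H; lia|].
  apply Rlt_trans with (nth j l 0); [apply IH; lia|apply H; lia].
Qed.

Lemma sorted_le : forall l n i j, ssorted l n -> (i <= j)%nat -> (j < n)%nat -> nth i l 0 <= nth j l 0.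
Proof.
  intros l n i j H Hij Hj. destruct (Nat.eq_dec i j) as [->|Hne]; [lra|].
  left; apply (sorted_lt l n); auto; lia.
Qed.

Lemma sorted_idx : forall l n i j, ssorted l n -> (i < n)%nat -> (j < n)%nat ->
  nth i l 0 < nth j l 0 -> (i < j)%nat.
Proof.
  intros l n i j H Hi Hj Hlt. destruct (Nat.lt_ge_cases i j); auto.
  pose proof (sorted_le l n j i H ltac:(lia) Hi). lra.
Qed.

Lemma sorted_NoDup : forall l n, length l = n -> ssorted l n -> NoDup l.
Proof.
  intros l n Hl H. apply (NoDup_nth l 0). intros i j Hi Hj E.
  destruct (Nat.lt_total i j) as [Hlt|[Heq|Hgt]]; auto.
  - pose proof (sorted_lt l n i j H Hlt ltac:(lia)); lra.
  - pose proof (sorted_lt l n j i H Hgt ltac:(lia)); lra.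
Qed.

Lemma sorted_roots_ext : forall f g n l, (forall x, f x = g x) -> sorted_roots f n l -> sorted_roots g n l.
Proof.
  intros f g n l E [H1 [H2 H3]]; split; [|split]; auto. intros i Hi; rewrite <- E; auto.
Qed.

Lemma roots_In : forall f n l, sorted_roots f n l -> forall r, In r l -> f r = 0.
Proof.
  intros f n l [H1 [H2 H3]] r Hr. destruct (In_nth l r 0 Hr) as [i [Hi <-]].
  apply H3; lia.
Qed.

Lemma Cnorm2_mul : forall x y, Cnorm2 (Cmul x y) = Cnorm2 x * Cnorm2 y.
Proof. intros [a b] [c d]; Cunf; ring. Qed.

Lemma Cnorm2_nonneg : forall x, 0 <= Cnorm2 x.
Proof. intros [a b]; Cunf; nra. Qed.

Lemma Cnorm2_zero : forall x, Cnorm2 x = 0 -> x = RtoC 0.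
Proof. intros [a b] H; Cunf; apply C_ext; simpl; nra. Qed.

Lemma Cmul_inv_r : forall x, Cnorm2 x <> 0 -> Cmul x (Cinv x) = RtoC 1.
Proof. intros [a b] H; Cunf; apply C_ext; simpl; field; auto. Qed.

Lemma Cinv_mul : forall x y, Cnorm2 x <> 0 -> Cnorm2 y <> 0 ->
  Cinv (Cmul x y) = Cmul (Cinv x) (Cinv y).
Proof.
  intros x y Hx Hy. assert (E := Cnorm2_mul x y).
  unfold Cinv at 1. rewrite E. destruct x as [a b], y as [c d]. Cunf.
  apply C_ext; simpl; field; auto.
Qed.

Lemma Cmul_cancel : forall w x y, Cnorm2 w <> 0 -> Cmul w x = Cmul w y -> x = y.
Proof.
  intros w x y Hw E. apply (f_equal (Cmul (Cinv w))) in E.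
  assert (K : forall u, Cmul (Cinv w) (Cmul w u) = u).
  { intros u. pose proof (Cmul_inv_r w Hw) as I.
    transitivity (Cmul (Cmul w (Cinv w)) u).
    - destruct w, u; apply C_ext; Cunf; ring.
    - rewrite I. destruct u; apply C_ext; Cunf; ring. }
  rewrite !K in E; exact E.
Qed.

Lemma Cnorm2_cprod : forall l z, (forall r, In r l -> Cnorm2 (Csub z (RtoC r)) <> 0) ->
  Cnorm2 (cprod l z) <> 0.
Proof.
  induction l as [|a l IH]; intros z H; simpl.
  - Cunf. lra.
  - rewrite Cnorm2_mul. apply Rmult_integral_contrapositive; split.
    + apply H; left; auto.
    + apply IH; intros; apply H; right; auto.
Qed.

Lemma Cinv_diff : forall x y, Cnorm2 x <> 0 -> Cnorm2 y <> 0 ->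
  Csub (Cinv x) (Cinv y) = Cmul (Csub y x) (Cinv (Cmul x y)).
Proof.
  intros x y Hx Hy. rewrite Cinv_mul by auto. destruct x as [a b], y as [c d]. Cunf.
  apply C_ext; simpl; field; auto.
Qed.

Definition lag_e (q : rpoly) (s : list R) (i : nat) : R :=
  peval q (nth i s 0) / rprod (nth i s 0) (rm i s).

Lemma lagrange : forall q s, (length q <= length s)%nat -> NoDup s -> (0 < length s)%nat ->
  forall z, pevalC q z = Csumn (fun i => Cmul (RtoC (lag_e q s i)) (cprod (rm i s) z)) (length s).
Proof.
  intros q s Hq Hnd Hs0 z.
  set (F := fun z => Csumn (fun i => Cmul (RtoC (lag_e q s i)) (cprod (rm i s) z)) (length s)).
  set (G := fun z => Cadd (pevalC q z) (Cmul (RtoC (-1)) (F z))).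
  assert (HG : forall z, G z = RtoC 0).
  { apply (vanish_f (length s) G s); auto.
    - unfold G. apply PolyLe_add.
      + exists q; split; auto.
      + apply PolyLe_scale. unfold F.
        apply (PolyLe_sum (length s) (fun i z => Cmul (RtoC (lag_e q s i)) (cprod (rm i s) z))).
        intros i Hi. apply PolyLe_scale.
        apply (PolyLe_mono (S (length (rm i s)))); [rewrite length_rm; lia|apply PolyLe_cprod].
    - intros r Hr. destruct (In_nth s r 0 Hr) as [m [Hm <-]].
      unfold G, F. rewrite (Csumn_single _ _ m Hm).
      + rewrite cprod_real, pevalC_real. unfold lag_e.
        assert (rprod (nth m s 0) (rm m s) <> 0) by (apply rprod_nz, notIn_rm; auto).
        apply C_ext; Cunf; field; auto.
      + intros i Hi Hne. rewrite cprod_real, rprod_In by (apply In_rm; auto).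
        apply C_ext; Cunf; ring. }
  specialize (HG z). unfold G in HG. apply (f_equal re) in HG as H1.
  apply (f_equal im) in HG as H2. fold (F z). destruct (pevalC q z), (F z).
  apply C_ext; Cunf; lra.
Qed.



Lemma pf_term : forall w c e, Cnorm2 w <> 0 ->
  Cmul (RtoC e) c = Cmul (Cmul w c) (Cmul (RtoC e) (Cinv w)).
Proof. intros [a b] [c1 c2] e H; Cunf; apply C_ext; simpl; field; auto. Qed.

Lemma pfrac : forall q s z, (length q <= length s)%nat -> NoDup s -> (0 < length s)%nat ->
  (forall i, (i < length s)%nat -> Cnorm2 (Csub z (RtoC (nth i s 0))) <> 0) ->
  pevalC q z = Cmul (cprod s z)
    (Csumn (fun i => Cmul (RtoC (lag_e q s i)) (Cinv (Csub z (RtoC (nth i s 0))))) (length s)).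
Proof.
  intros q s z H1 H2 H3 H4. rewrite (lagrange q s H1 H2 H3 z), Cmul_Csumn.
  apply Csumn_ext. intros i Hi. rewrite (cprod_rm i s z Hi). apply pf_term; auto.
Qed.

Definition Sf (d : nat -> R) (s : list R) (n : nat) (z : C) : C :=
  Csumn (fun i => Cmul (RtoC (d i)) (Cinv (Csub z (RtoC (nth i s 0))))) n.

Lemma disk_X : forall a b X Y, a < b -> (X - a) * (X - b) + Y * Y < 0 -> a < X < b.
Proof. intros a b X Y H1 H2. split; nra. Qed.

Lemma disk_nz : forall a b X Y s, a < b -> (X - a) * (X - b) + Y * Y < 0 -> (s <= a \/ b <= s) ->
  0 < (X - s) * (X - s) + Y * Y.
Proof.
  intros a b X Y s H1 H2 H3. pose proof (disk_X a b X Y H1 H2).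
  destruct (Req_dec Y 0) as [->|HY]; [|nra].
  assert (X - s <> 0) by lra. nra.
Qed.

Lemma term_sign : forall a b s X1 Y1 X2 Y2, a < b ->
  (X1 - a) * (X1 - b) + Y1 * Y1 < 0 -> (X2 - a) * (X2 - b) + Y2 * Y2 < 0 ->
  0 < Y1 * Y2 -> (s <= a \/ b <= s) ->
  let z1 := mkC X1 Y1 in let z2 := mkC X2 Y2 in
  let v := Y1 * im (Cmul (Cmul (Csub z1 (RtoC b)) (Csub z2 (RtoC b)))
                    (Cinv (Cmul (Csub z1 (RtoC s)) (Csub z2 (RtoC s))))) in
  v <= 0 /\ (s <= a -> v < 0).
Proof.
  intros a b s X1 Y1 X2 Y2 Hab D1 D2 HY Hs z1 z2 v.
  pose proof (disk_nz a b X1 Y1 s Hab D1 Hs) as N1.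
  pose proof (disk_nz a b X2 Y2 s Hab D2 Hs) as N2.
  pose proof (disk_X a b X1 Y1 Hab D1) as B1.
  pose proof (disk_X a b X2 Y2 Hab D2) as B2.
  set (A1 := (X1 - b) * (X1 - s) + Y1 * Y1).
  set (A2 := (X2 - b) * (X2 - s) + Y2 * Y2).
  assert (Ev : v = (b - s) * (A1 * Y1 * Y2 + Y1 * Y1 * A2) /
                   (((X1 - s) * (X1 - s) + Y1 * Y1) * ((X2 - s) * (X2 - s) + Y2 * Y2))).
  { unfold v, z1, z2. rewrite Cinv_mul by (Cunf; lra). unfold A1, A2. Cunf. field; lra. }
  assert (Hpos : 0 < ((X1 - s) * (X1 - s) + Y1 * Y1) * ((X2 - s) * (X2 - s) + Y2 * Y2)) by nra.
  assert (Y1 * Y1 > 0) by nra.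
  destruct (Rle_or_lt s a) as [Hsa|Hsa].
  - assert (A1 < 0). { unfold A1. assert ((X1 - b) * (a - s) <= 0) by nra. nra. }
    assert (A2 < 0). { unfold A2. assert ((X2 - b) * (a - s) <= 0) by nra. nra. }
    assert (Hn : (b - s) * (A1 * Y1 * Y2 + Y1 * Y1 * A2) < 0).
    { assert (A1 * (Y1 * Y2) < 0) by nra. assert (Y1 * Y1 * A2 < 0) by nra.
      assert (b - s > 0) by lra. nra. }
    assert (v < 0). { rewrite Ev. apply Rdiv_neg_pos; auto. }
    split; [lra|auto].
  - destruct Hs as [Hs|Hs]; [lra|].
    split; [|intros; lra].
    destruct (Req_dec s b) as [->|Hsb].
    + rewrite Ev. replace (b - b) with 0 by ring. rewrite Rmult_0_l. unfold Rdiv. lra.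
    + assert (A1 > 0). { unfold A1. nra. }
      assert (A2 > 0). { unfold A2. nra. }
      assert (Hn : (b - s) * (A1 * Y1 * Y2 + Y1 * Y1 * A2) < 0).
      { assert (A1 * (Y1 * Y2) > 0) by nra. assert (Y1 * Y1 * A2 > 0) by nra.
        assert (b - s < 0) by lra. nra. }
      rewrite Ev. left. apply Rdiv_neg_pos; auto.
Qed.

Lemma key : forall d s n a b z1 z2, (forall i, (i < n)%nat -> 0 < d i) -> a < b ->
  (forall i, (i < n)%nat -> nth i s 0 <= a \/ b <= nth i s 0) ->
  (exists j, (j < n)%nat /\ nth j s 0 <= a) ->
  (re z1 - a) * (re z1 - b) + im z1 * im z1 < 0 ->
  (re z2 - a) * (re z2 - b) + im z2 * im z2 < 0 ->
  Sf d s n z1 = Sf d s n z2 -> z1 = z2.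
Proof.
  intros d s n a b [X1 Y1] [X2 Y2] Hd Hab Hout [j [Hj Hsj]] D1 D2 HS. simpl in D1, D2.
  assert (N1 : forall i, (i < n)%nat -> 0 < (X1 - nth i s 0) * (X1 - nth i s 0) + Y1 * Y1)
    by (intros; apply (disk_nz a b); auto).
  assert (N2 : forall i, (i < n)%nat -> 0 < (X2 - nth i s 0) * (X2 - nth i s 0) + Y2 * Y2)
    by (intros; apply (disk_nz a b); auto).
  assert (Him : forall X Y, im (Sf d s n (mkC X Y)) =
     - Y * Rsumn (fun i => d i / ((X - nth i s 0) * (X - nth i s 0) + Y * Y)) n).
  { intros X Y. unfold Sf. rewrite im_Csumn, <- Rsumn_scal. apply Rsumn_ext. intros i Hi.
    Cunf. rewrite !Rminus_0_r. unfold Rdiv. ring. }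
  assert (C1 : 0 < Rsumn (fun i => d i / ((X1 - nth i s 0) * (X1 - nth i s 0) + Y1 * Y1)) n).
  { apply (Rsumn_pos _ _ j); [intros i Hi; left; apply Rdiv_lt_0_compat; auto|auto|apply Rdiv_lt_0_compat; auto]. }
  assert (C2 : 0 < Rsumn (fun i => d i / ((X2 - nth i s 0) * (X2 - nth i s 0) + Y2 * Y2)) n).
  { apply (Rsumn_pos _ _ j); [intros i Hi; left; apply Rdiv_lt_0_compat; auto|auto|apply Rdiv_lt_0_compat; auto]. }
  assert (HI := f_equal im HS). rewrite !Him in HI.
  destruct (Req_dec ((X2 - X1) * (X2 - X1) + (Y2 - Y1) * (Y2 - Y1)) 0) as [E0|Hz'].
  { pose proof (Rle_0_sqr (X2-X1)); pose proof (Rle_0_sqr (Y2-Y1)); unfold Rsqr in *.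
    assert (Q1 : (X2-X1)*(X2-X1) = 0) by lra. assert (Q2 : (Y2-Y1)*(Y2-Y1) = 0) by lra.
    apply Rmult_integral in Q1; apply Rmult_integral in Q2.
    assert (X1 = X2) by (destruct Q1; lra). assert (Y1 = Y2) by (destruct Q2; lra).
    subst; reflexivity. }
  exfalso.
  set (z1 := mkC X1 Y1) in *; set (z2 := mkC X2 Y2) in *.
  assert (Hz : Cnorm2 (Csub z2 z1) <> 0) by (unfold z1, z2; Cunf; exact Hz').
  set (T := Csumn (fun i => Cmul (RtoC (d i))
                   (Cinv (Cmul (Csub z1 (RtoC (nth i s 0))) (Csub z2 (RtoC (nth i s 0)))))) n).
  assert (ET : Csub (Sf d s n z1) (Sf d s n z2) = Cmul (Csub z2 z1) T).
  { unfold Sf, T; rewrite Csub_Csumn, Cmul_Csumn; apply Csumn_ext; intros i Hi.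
    specialize (N1 i Hi); specialize (N2 i Hi).
    rewrite Cinv_mul by (unfold z1, z2; Cunf; lra). unfold z1, z2; Cunf.
    apply C_ext; simpl; field; lra. }
  assert (T0 : T = RtoC 0).
  { apply (Cmul_cancel (Csub z2 z1)); auto. rewrite <- ET, HS.
    destruct (Sf d s n z2), z1, z2; apply C_ext; Cunf; ring. }
  destruct (Req_dec Y1 0) as [Y10|Y10].
  - assert (Y2 = 0) by (subst Y1; nra). subst Y1 Y2.
    assert (HR : 0 < re T).
    { unfold T; rewrite re_Csumn.
      assert (Hp : forall i, (i < n)%nat -> 0 < re (Cmul (RtoC (d i)) (Cinv (Cmul (Csub z1 (RtoC (nth i s 0)))
                      (Csub z2 (RtoC (nth i s 0))))))).
      { intros i Hi.
        pose proof (Hout i Hi) as Ho. pose proof (disk_X a b X1 0 Hab D1).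
        pose proof (disk_X a b X2 0 Hab D2).
        assert (PP : 0 < (X1 - nth i s 0) * (X2 - nth i s 0)) by (destruct Ho; nra).
        assert (Ed : re (Cmul (RtoC (d i)) (Cinv (Cmul (Csub z1 (RtoC (nth i s 0)))
                      (Csub z2 (RtoC (nth i s 0)))))) = d i / ((X1 - nth i s 0) * (X2 - nth i s 0)))
          by (unfold z1, z2; Cunf; field; lra).
        rewrite Ed. apply Rdiv_lt_0_compat; auto. }
      apply (Rsumn_pos _ _ j); [intros i Hi; left; auto|auto|auto]. }
    rewrite T0 in HR; simpl in HR; lra.
  - assert (HY : 0 < Y1 * Y2).
    { revert HI C1 C2. generalize (Rsumn (fun i => d i / ((X1 - nth i s 0) * (X1 - nth i s 0) + Y1 * Y1)) n).
      generalize (Rsumn (fun i => d i / ((X2 - nth i s 0) * (X2 - nth i s 0) + Y2 * Y2)) n).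
      intros c2 c1 HI C1 C2.
      assert (E : Y1 * Y2 * c2 = Y1 * Y1 * c1).
      { apply (f_equal (Rmult Y1)) in HI. lra. }
      assert (0 < Y1 * Y1) by (destruct (Rlt_or_le 0 Y1); nra).
      assert (0 < Y1 * Y2 * c2) by nra.
      destruct (Rlt_or_le 0 (Y1 * Y2)); auto. nra. }
    set (W := Cmul (Csub z1 (RtoC b)) (Csub z2 (RtoC b))).
    assert (HW : im (Cmul W T) = Rsumn (fun i => d i * im (Cmul W
          (Cinv (Cmul (Csub z1 (RtoC (nth i s 0))) (Csub z2 (RtoC (nth i s 0))))))) n).
    { unfold T; rewrite Cmul_Csumn, im_Csumn; apply Rsumn_ext; intros i Hi.
      destruct W, (Cinv (Cmul (Csub z1 (RtoC (nth i s 0))) (Csub z2 (RtoC (nth i s 0))))).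
      Cunf; ring. }
    assert (Hneg : Y1 * im (Cmul W T) < 0).
    { rewrite HW, <- Rsumn_scal; apply (Rsumn_neg _ _ j); auto.
      - intros i Hi.
        pose proof (term_sign a b (nth i s 0) X1 Y1 X2 Y2 Hab D1 D2 HY (Hout i Hi)) as [K _].
        pose proof (Hd i Hi). unfold W, z1, z2. nra.
      - pose proof (term_sign a b (nth j s 0) X1 Y1 X2 Y2 Hab D1 D2 HY (Hout j Hj)) as [_ K].
        pose proof (Hd j Hj). specialize (K Hsj). unfold W, z1, z2. nra. }
    rewrite T0 in Hneg. destruct W; Cunf; lra.
Qed.



Lemma same_side : forall u v l, (forall y, In y l -> (y < u /\ y < v) \/ (u < y /\ v < y)) ->
  0 < rprod u l * rprod v l.
Proof.
  intros u v; induction l as [|y l IH]; intros H; simpl; [lra|].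
  assert (0 < (u - y) * (v - y)) by (destruct (H y (or_introl eq_refl)); nra).
  assert (0 < rprod u l * rprod v l) by (apply IH; intros; apply H; right; auto).
  replace ((u - y) * rprod u l * ((v - y) * rprod v l)) with
     (((u - y) * (v - y)) * (rprod u l * rprod v l)) by ring. nra.
Qed.

Lemma one_between : forall u v l1 y l2,
  (forall x, In x (l1 ++ l2) -> (x < u /\ x < v) \/ (u < x /\ v < x)) -> u < y < v ->
  rprod u (l1 ++ y :: l2) * rprod v (l1 ++ y :: l2) < 0.
Proof.
  intros u v l1 y l2 H Hy. rewrite !rprod_app. simpl.
  assert (A := same_side u v l1 ltac:(intros; apply H; apply in_or_app; left; auto)).
  assert (B := same_side u v l2 ltac:(intros; apply H; apply in_or_app; right; auto)).
  assert ((u - y) * (v - y) < 0) by nra.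
  replace (rprod u l1 * ((u - y) * rprod u l2) * (rprod v l1 * ((v - y) * rprod v l2))) with
    ((rprod u l1 * rprod v l1) * ((u - y) * (v - y)) * (rprod u l2 * rprod v l2)) by ring.
  assert (0 < (rprod u l1 * rprod v l1) * (rprod u l2 * rprod v l2)) by nra. nra.
Qed.

Lemma split_idx : forall (s l1 l2 : list R) x, s = l1 ++ x :: l2 ->
  (forall y, In y l1 -> exists m, (m < length l1)%nat /\ nth m s 0 = y) /\
  (forall y, In y l2 -> exists m, (length l1 < m < length s)%nat /\ nth m s 0 = y).
Proof.
  intros s l1 l2 x E. split.
  - intros y Hy. destruct (In_nth l1 y 0 Hy) as [m [Hm <-]]. exists m; split; auto.
    rewrite E, app_nth1; auto.
  - intros y Hy. destruct (In_nth l2 y 0 Hy) as [m [Hm <-]]. exists (length l1 + S m)%nat.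
    split.
    + rewrite E, length_app; simpl; lia.
    + rewrite E, app_nth2 by lia. replace (length l1 + S m - length l1)%nat with (S m) by lia.
      reflexivity.
Qed.

Lemma OB_nth : forall xs n m u v, length xs = n -> ssorted xs n -> (m < n)%nat ->
  (forall l, (l < m)%nat -> nth l xs 0 < u) -> (forall l, (m < l < n)%nat -> v < nth l xs 0) ->
  u < nth m xs 0 < v -> rprod u xs * rprod v xs < 0.
Proof.
  intros xs n m u v Hl Hs Hm H1 H2 H3.
  destruct (nth_split xs 0 (ltac:(lia) : (m < length xs)%nat)) as [l1 [l2 [E1 E2]]].
  destruct (split_idx xs l1 l2 _ E1) as [S1 S2].
  rewrite E1. apply one_between; auto.
  intros x Hx. apply in_app_or in Hx as [Hx|Hx].
  - destruct (S1 x Hx) as [l [Hl1 <-]]. specialize (H1 l ltac:(lia)). left; lra.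
  - destruct (S2 x Hx) as [l [Hl1 <-]]. specialize (H2 l ltac:(lia)). right; lra.
Qed.

Lemma Tsign : forall s k i, length s = k -> ssorted s k -> (S i < k)%nat ->
  rprod (nth i s 0) (rm i s) * rprod (nth (S i) s 0) (rm (S i) s) < 0.
Proof.
  intros s k i Hl Hs Hi.
  assert (Huv : nth i s 0 < nth (S i) s 0) by (apply Hs; lia).
  destruct (nth_split s 0 (ltac:(lia) : (i < length s)%nat)) as [l1 [l2' [E1 E2]]].
  assert (Hc : nth (S i) s 0 = nth 0 l2' 0).
  { rewrite E1 at 1. rewrite app_nth2 by lia. replace (S i - length l1)%nat with 1%nat by lia. reflexivity. }
  destruct l2' as [|c l2].
  { rewrite E1, length_app in Hl. simpl in Hl. lia. }
  simpl in Hc.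
  remember (nth i s 0) as u. remember (nth (S i) s 0) as v. subst c.
  assert (E1' : s = (l1 ++ [u]) ++ v :: l2) by (rewrite E1, <- app_assoc; reflexivity).
  assert (R1 : rm i s = l1 ++ v :: l2) by (rewrite E1, <- E2; apply rm_app).
  assert (R2 : rm (S i) s = (l1 ++ [u]) ++ l2).
  { rewrite E1'. replace (S i) with (length (l1 ++ [u])) by (rewrite length_app; simpl; lia). apply rm_app. }
  destruct (split_idx s l1 (v :: l2) u E1) as [S1 _].
  destruct (split_idx s (l1 ++ [u]) l2 v E1') as [_ S2].
  rewrite length_app in S2; simpl in S2.
  assert (A : 0 < rprod u l1 * rprod v l1).
  { apply same_side. intros y Hy; destruct (S1 y Hy) as [m [Hm Hy']]. subst y.
    pose proof (sorted_lt s k m i Hs ltac:(lia) ltac:(lia)). left; lra. }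
  assert (B : 0 < rprod u l2 * rprod v l2).
  { apply same_side. intros y Hy; destruct (S2 y Hy) as [m [Hm Hy']]. subst y.
    pose proof (sorted_lt s k (S i) m Hs ltac:(lia) ltac:(lia)). right; lra. }
  rewrite R1, R2, !rprod_app. simpl.
  replace (rprod u l1 * ((u - v) * rprod u l2) * (rprod v l1 * ((v - u) * 1) * rprod v l2))
    with (- ((u - v) * (u - v)) * ((rprod u l1 * rprod v l1) * (rprod u l2 * rprod v l2))) by ring.
  assert (0 < (u - v) * (u - v)) by nra.
  assert (0 < (rprod u l1 * rprod v l1) * (rprod u l2 * rprod v l2)) by nra. nra.
Qed.

Lemma same_sign_all : forall (d : nat -> R) k, (2 <= k)%nat ->
  (forall i, (S i < k)%nat -> 0 < d i * d (S i)) ->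
  (forall i, (i < k)%nat -> 0 < d i) \/ (forall i, (i < k)%nat -> d i < 0).
Proof.
  intros d k Hk H. pose proof (H 0%nat ltac:(lia)).
  destruct (Rlt_or_le 0 (d 0%nat)) as [P|P].
  - left. intros i Hi. induction i; auto. pose proof (H i Hi). pose proof (IHi ltac:(lia)). nra.
  - assert (d 0%nat < 0) by (destruct P; [auto|rewrite H1 in H0; lra]).
    right. intros i Hi. induction i; auto. pose proof (H i Hi). pose proof (IHi ltac:(lia)). nra.
Qed.

Lemma core_inj : forall k P q s j z1 z2, (2 <= k)%nat -> length P = S k -> lead P <> 0 ->
  (length q <= k)%nat -> sorted_roots (peval P) k s ->
  (forall i, (S i < k)%nat -> peval q (nth i s 0) * peval q (nth (S i) s 0) < 0) ->
  (S j < k)%nat ->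
  (re z1 - nth j s 0) * (re z1 - nth (S j) s 0) + im z1 * im z1 < 0 ->
  (re z2 - nth j s 0) * (re z2 - nth (S j) s 0) + im z2 * im z2 < 0 ->
  Cmul (pevalC q z1) (pevalC P z2) = Cmul (pevalC q z2) (pevalC P z1) -> z1 = z2.
Proof.
  intros k P q s j z1 z2 Hk HPl HL Hq Hsr Halt Hj D1 D2 Hcross.
  pose proof Hsr as [Hl [Hs Hr]].
  assert (Hnd : NoDup s) by (apply (sorted_NoDup s k); auto).
  assert (HP : forall z, pevalC P z = Cmul (cprod s z) (RtoC (lead P)))
    by (intros; apply (factor k); auto; apply (roots_In _ k); auto).
  set (L := lead P) in *.
  assert (Hab : nth j s 0 < nth (S j) s 0) by (apply Hs; auto).
  assert (Hout : forall i, (i < k)%nat -> nth i s 0 <= nth j s 0 \/ nth (S j) s 0 <= nth i s 0).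
  { intros i Hi. destruct (Nat.le_gt_cases i j).
    - left. apply (sorted_le s k); auto; lia.
    - right. apply (sorted_le s k); auto; lia. }
  assert (Hnz : forall z, (re z - nth j s 0) * (re z - nth (S j) s 0) + im z * im z < 0 ->
     forall i, (i < length s)%nat -> Cnorm2 (Csub z (RtoC (nth i s 0))) <> 0).
  { intros [X Y] D i Hi. simpl in D. pose proof (disk_nz _ _ X Y (nth i s 0) Hab D (Hout i ltac:(lia))).
    Cunf. rewrite Rminus_0_r. lra. }
  set (d := fun i => lag_e q s i / L).
  assert (HQ : forall z, (re z - nth j s 0) * (re z - nth (S j) s 0) + im z * im z < 0 ->
     pevalC q z = Cmul (pevalC P z) (Sf d s k z)).
  { intros z D. rewrite (pfrac q s z) by (auto; lia). rewrite HP, <- Hl.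
    assert (E : Sf d s (length s) z = Cmul (RtoC (/ L))
       (Csumn (fun i => Cmul (RtoC (lag_e q s i)) (Cinv (Csub z (RtoC (nth i s 0))))) (length s))).
    { unfold Sf. rewrite Cmul_Csumn. apply Csumn_ext. intros i Hi. unfold d.
      destruct (Cinv (Csub z (RtoC (nth i s 0)))). Cunf. apply C_ext; simpl; unfold Rdiv; ring. }
    rewrite E. destruct (cprod s z), (Csumn _ _). Cunf. apply C_ext; simpl; field; auto. }
  assert (HPnz : forall z, (re z - nth j s 0) * (re z - nth (S j) s 0) + im z * im z < 0 ->
     Cnorm2 (pevalC P z) <> 0).
  { intros z D. rewrite HP, Cnorm2_mul. apply Rmult_integral_contrapositive; split.
    - apply Cnorm2_cprod. intros r Hr'. destruct (In_nth s r 0 Hr') as [i [Hi <-]]. apply Hnz; auto.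
    - Cunf. intro E. apply HL. nra. }
  assert (HSf : Sf d s k z1 = Sf d s k z2).
  { rewrite (HQ z1 D1), (HQ z2 D2) in Hcross.
    apply (Cmul_cancel (Cmul (pevalC P z1) (pevalC P z2))).
    - rewrite Cnorm2_mul. apply Rmult_integral_contrapositive; split; apply HPnz; auto.
    - revert Hcross. generalize (pevalC P z1) (pevalC P z2) (Sf d s k z1) (Sf d s k z2).
      intros u1 u2 w1 w2 Hc.
      transitivity (Cmul (Cmul u1 w1) u2); [destruct u1, u2, w1; apply C_ext; Cunf; ring|].
      rewrite Hc. destruct u1, u2, w2; apply C_ext; Cunf; ring. }
  assert (HT : forall i, (S i < k)%nat -> rprod (nth i s 0) (rm i s) * rprod (nth (S i) s 0) (rm (S i) s) < 0)
    by (intros; apply Tsign with k; auto).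
  assert (Hdd : forall i, (S i < k)%nat -> 0 < d i * d (S i)).
  { intros i Hi. specialize (HT i Hi). specialize (Halt i Hi).
    assert (T1 : rprod (nth i s 0) (rm i s) <> 0) by (intro E; rewrite E in HT; lra).
    assert (T2 : rprod (nth (S i) s 0) (rm (S i) s) <> 0) by (intro E; rewrite E in HT; lra).
    assert (E : d i * d (S i) = (peval q (nth i s 0) * peval q (nth (S i) s 0)) *
       / (rprod (nth i s 0) (rm i s) * rprod (nth (S i) s 0) (rm (S i) s)) * / (L * L)).
    { unfold d, lag_e. field; auto. }
    rewrite E. assert (0 < / (L * L)) by (apply Rinv_0_lt_compat; nra).
    assert (/ (rprod (nth i s 0) (rm i s) * rprod (nth (S i) s 0) (rm (S i) s)) < 0)
      by (apply Rinv_lt_0_compat; auto).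
    apply Rmult_lt_0_compat; auto.
    revert Halt H0. generalize (peval q (nth i s 0) * peval q (nth (S i) s 0)).
    generalize (/ (rprod (nth i s 0) (rm i s) * rprod (nth (S i) s 0) (rm (S i) s))).
    intros; nra. }
  assert (Hex : exists j0, (j0 < k)%nat /\ nth j0 s 0 <= nth j s 0) by (exists j; split; [lia|lra]).
  destruct (same_sign_all d k Hk Hdd) as [Dp|Dn].
  - apply (key d s k (nth j s 0) (nth (S j) s 0)); auto.
  - apply (key (fun i => - d i) s k (nth j s 0) (nth (S j) s 0)); auto.
    + intros i Hi; specialize (Dn i Hi); lra.
    + assert (Neg : forall z, Sf (fun i => - d i) s k z = Cmul (RtoC (-1)) (Sf d s k z)).
      { intros z. unfold Sf. rewrite Cmul_Csumn. apply Csumn_ext. intros i Hi.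
        destruct (Cinv (Csub z (RtoC (nth i s 0)))). Cunf. apply C_ext; simpl; ring. }
      rewrite !Neg, HSf. reflexivity.
Qed.

Lemma continuity_peval : forall l, continuity (peval l).
Proof.
  induction l as [|a l IH]; simpl.
  - apply continuity_const. intros x y; reflexivity.
  - apply (continuity_plus (fun _ => a) (fun x => x * peval l x)).
    + apply continuity_const. intros x y; reflexivity.
    + apply (continuity_mult (fun x => x) (peval l)); auto.
      apply derivable_continuous, derivable_id.
Qed.

Lemma ivt_sign : forall f u v, continuity f -> u < v -> f u * f v < 0 ->
  exists x, u < x < v /\ f x = 0.
Proof.
  intros f u v Hc Huv Hs.
  destruct (Rlt_or_le (f u) 0) as [Hu|Hu].
  - assert (0 < f v) by nra.
    destruct (IVT f u v Hc Huv Hu H) as [x [[H1 H2] H3]].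
    exists x; split; auto. split.
    + destruct H1; auto. subst; lra.
    + destruct H2; auto. subst; lra.
  - assert (f v < 0) by nra. assert (0 < f u) by nra.
    destruct (IVT (fun x => - f x) u v) as [x [[H1 H2] H3]].
    + apply continuity_opp; auto.
    + auto.
    + lra.
    + lra.
    + exists x; split; [split|lra].
      * destruct H1; auto. subst; lra.
      * destruct H2; auto. subst; lra.
Qed.

Lemma core_ivt : forall P q a b t, a < b -> peval P a = 0 -> peval P b = 0 ->
  peval q a * peval q b < 0 -> peval P t <> 0 ->
  exists x, a < x < b /\ peval q x * peval P t = peval q t * peval P x.
Proof.
  intros P q a b t Hab Ha Hb Hq Ht.
  destruct (ivt_sign (fun x => peval q x * peval P t - peval q t * peval P x) a b) as [x [Hx Fx]].
  - apply continuity_minus; apply continuity_mult;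
      try apply continuity_peval; apply continuity_const; intros u v; reflexivity.
  - auto.
  - rewrite Ha, Hb. assert (0 < peval P t * peval P t) by nra. nra.
  - exists x; split; auto. lra.
Qed.



Lemma ratmap_cross : forall q p z1 z2, ratmap q p (Some z1) = ratmap q p (Some z2) ->
  Cmul (pevalC q z1) (pevalC p z2) = Cmul (pevalC q z2) (pevalC p z1).
Proof.
  intros q p z1 z2. unfold ratmap.
  destruct (Req_EM_T (Cnorm2 (pevalC p z1)) 0) as [E1|E1];
  destruct (Req_EM_T (Cnorm2 (pevalC p z2)) 0) as [E2|E2]; intros H; try discriminate.
  - apply Cnorm2_zero in E1, E2. rewrite E1, E2. apply C_ext; Cunf; ring.
  - assert (H' : Cdiv (pevalC q z1) (pevalC p z1) = Cdiv (pevalC q z2) (pevalC p z2)) by congruence.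
    clear H; rename H' into H.
    assert (K : forall u w, Cnorm2 w <> 0 -> u = Cmul (Cdiv u w) w).
    { intros [u1 u2] [w1 w2] Hw. Cunf. apply C_ext; simpl; field; auto. }
    rewrite (K (pevalC q z1) (pevalC p z1) E1), (K (pevalC q z2) (pevalC p z2) E2), H.
    destruct (Cdiv (pevalC q z2) (pevalC p z2)), (pevalC p z1), (pevalC p z2).
    apply C_ext; Cunf; ring.
Qed.

Lemma ratmap_real : forall q p x, ratmap q p (Some (RtoC x)) =
  if Req_EM_T (peval p x) 0 then None else Some (RtoC (peval q x / peval p x)).
Proof.
  intros q p x. unfold ratmap. rewrite !pevalC_real.
  destruct (Req_EM_T (Cnorm2 (RtoC (peval p x))) 0) as [E|E];
  destruct (Req_EM_T (peval p x) 0) as [F|F]; auto.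
  - exfalso. apply F. Cunf. nra.
  - exfalso. apply E. rewrite F. Cunf. ring.
  - f_equal. Cunf. apply C_ext; simpl; field; auto.
Qed.

Lemma cross_ratmap_real : forall q p u v, (forall t, peval p t = 0 -> peval q t <> 0) ->
  peval q u * peval p v = peval q v * peval p u ->
  ratmap q p (Some (RtoC u)) = ratmap q p (Some (RtoC v)).
Proof.
  intros q p u v NC H. rewrite !ratmap_real.
  destruct (Req_EM_T (peval p u) 0) as [E1|E1];
  destruct (Req_EM_T (peval p v) 0) as [E2|E2]; auto.
  - exfalso. rewrite E1 in H. apply (NC u E1).
    assert (H0 : peval q u * peval p v = 0) by lra. apply Rmult_integral in H0 as [H0|H0]; lra.
  - exfalso. rewrite E2 in H. apply (NC v E2).
    assert (peval q v * peval p u = 0) by lra. apply Rmult_integral in H0 as [H0|H0]; lra.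
  - f_equal. f_equal. field_simplify_eq; auto. lra.
Qed.

Lemma diam_iff : forall a b z, diam_disk a b (Some z) <->
  (re z - a) * (re z - b) + im z * im z < 0.
Proof.
  intros a b [X Y]. unfold diam_disk, open_disk. simpl.
  assert (E : Cnorm2 (Csub (mkC X Y) (RtoC ((a + b) / 2))) - (b - a) / 2 * ((b - a) / 2)
     = (X - a) * (X - b) + Y * Y) by (Cunf; field).
  split; intros; lra.
Qed.

Lemma diam_real : forall a b, a < b -> is_real_disk (diam_disk a b).
Proof.
  intros a b Hab. split.
  - left. exists (RtoC ((a + b) / 2)), ((b - a) / 2). split; [lra|]. intros; unfold diam_disk; tauto.
  - intros [z|]; simpl; [|tauto]. unfold diam_disk, open_disk.
    replace (Cnorm2 (Csub (Cconj z) (RtoC ((a + b) / 2)))) with (Cnorm2 (Csub z (RtoC ((a + b) / 2))));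
      [tauto|]. destruct z; Cunf; ring.
Qed.

Lemma diam_real_pt : forall a b x, a < x < b -> diam_disk a b (Some (RtoC x)).
Proof. intros a b x H. apply diam_iff. simpl. nra. Qed.

Lemma disk_cases : forall a b (S : CP1 -> Prop), a < b -> is_real_disk S ->
  (forall x, diam_disk a b x -> S x) -> (exists x, S x /\ ~ diam_disk a b x) ->
  exists e t, (e = a \/ e = b) /\ S (Some (RtoC e)) /\ S (Some (RtoC t)) /\ (t < a \/ b < t).
Proof.
  intros a b S Hab [HS Hconj] Hsub [x0 [Sx0 Dx0]].
  assert (Dx : forall x, a < x < b -> S (Some (RtoC x))) by (intros; apply Hsub, diam_real_pt; auto).
  assert (Dm : S (Some (RtoC ((a + b) / 2)))) by (apply Dx; lra).
  destruct HS as [[[c1 c2] [r [Hr HSc]]] | [[a1 [a2 [t0 [Ha HSh]]]] | [[c1 c2] [r [Hr HSo]]]]].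
  -
    assert (Hc2 : c2 = 0).
    { destruct (Req_dec c2 0) as [|Hne]; auto. exfalso.
      destruct (Rle_or_lt r (Rabs c2)) as [Hle|Hlt].
      + assert (S1 : S (Some (mkC c1 c2))) by (apply HSc; simpl; Cunf; nra).
        apply Hconj in S1. apply HSc in S1. simpl in S1. Cunf.
        unfold Rabs in Hle; destruct (Rcase_abs c2); nra.
      + unfold Rabs in Hlt; destruct (Rcase_abs c2) as [Hn|Hp].
        * assert (S1 : S (Some (mkC c1 (- r)))) by (apply HSc; simpl; Cunf; nra).
          apply Hconj in S1. apply HSc in S1. simpl in S1. Cunf. nra.
        * assert (S1 : S (Some (mkC c1 r))) by (apply HSc; simpl; Cunf; nra).
          apply Hconj in S1. apply HSc in S1. simpl in S1. Cunf. nra. }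
    subst c2.
    assert (Sr : forall x, S (Some (RtoC x)) <-> (x - c1) * (x - c1) < r * r).
    { intros x. rewrite HSc. simpl. Cunf. split; intros; nra. }
    assert (L1 : c1 - r <= a).
    { destruct (Rle_or_lt (c1 - r) a) as [|H]; auto. exfalso.
      destruct (Rlt_or_le (c1 - r) b) as [H2|H2].
      - assert (K := Dx ((a + (c1 - r)) / 2) ltac:(lra)). apply Sr in K. nra.
      - apply Sr in Dm. nra. }
    assert (L2 : b <= c1 + r).
    { destruct (Rle_or_lt b (c1 + r)) as [|H]; auto. exfalso.
      destruct (Rlt_or_le a (c1 + r)) as [H2|H2].
      - assert (K := Dx ((b + (c1 + r)) / 2) ltac:(lra)). apply Sr in K. nra.
      - apply Sr in Dm. nra. }
    destruct (Rlt_or_le (c1 - r) a) as [H1|H1].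
    + exists a, ((a + (c1 - r)) / 2). split; [left; auto|]. split; [apply Sr; nra|].
      split; [apply Sr; nra|left; lra].
    + destruct (Rlt_or_le b (c1 + r)) as [H2|H2].
      * exists b, ((b + (c1 + r)) / 2). split; [right; auto|]. split; [apply Sr; nra|].
        split; [apply Sr; nra|right; lra].
      * exfalso. apply Dx0. assert (c1 = (a + b) / 2) by lra. assert (r = (b - a) / 2) by lra.
        subst c1 r. apply HSc in Sx0. unfold diam_disk.
        replace (RtoC ((a + b) / 2)) with (mkC ((a + b) / 2) 0) by reflexivity. exact Sx0.
  -
    assert (Ha2 : a2 = 0).
    { destruct (Req_dec a2 0) as [|Hne]; auto. exfalso.
      assert (S1 : S (Some (mkC 0 ((Rabs t0 + 1) / a2)))).
      { apply HSh. simpl. replace (a1 * 0 + a2 * ((Rabs t0 + 1) / a2)) with (Rabs t0 + 1) by (field; auto).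
        pose proof (Rle_abs t0). lra. }
      apply Hconj in S1. apply HSh in S1. simpl in S1.
      replace (a1 * 0 + a2 * - ((Rabs t0 + 1) / a2)) with (- (Rabs t0 + 1)) in S1 by (field; auto).
      pose proof (Rle_abs (- t0)). rewrite Rabs_Ropp in H. lra. }
    subst a2. destruct Ha as [Ha|Ha]; [|lra].
    assert (Sr : forall x, S (Some (RtoC x)) <-> a1 * x > t0).
    { intros x. rewrite HSh. simpl. split; intros; lra. }
    apply Sr in Dm.
    destruct (Rlt_or_le 0 a1) as [P|P].
    + exists b, (b + 1). split; [right; auto|]. split; [apply Sr; nra|]. split; [apply Sr; nra|right; lra].
    + assert (a1 < 0) by lra.
      exists a, (a - 1). split; [left; auto|]. split; [apply Sr; nra|]. split; [apply Sr; nra|left; lra].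
  -
    assert (Hc2 : c2 = 0).
    { destruct (Req_dec c2 0) as [|Hne]; auto. exfalso.
      destruct (Rlt_or_le 0 c2) as [P|P].
      + assert (S1 : S (Some (mkC c1 (- c2 - r)))) by (apply HSo; simpl; Cunf; nra).
        apply Hconj in S1. apply HSo in S1. simpl in S1. Cunf. nra.
      + assert (S1 : S (Some (mkC c1 (- c2 + r)))) by (apply HSo; simpl; Cunf; nra).
        apply Hconj in S1. apply HSo in S1. simpl in S1. Cunf. nra. }
    subst c2.
    assert (Sr : forall x, S (Some (RtoC x)) <-> (x - c1) * (x - c1) > r * r).
    { intros x. rewrite HSo. simpl. Cunf. split; intros; nra. }
    apply Sr in Dm.
    destruct (Rlt_or_le c1 ((a + b) / 2)) as [P|P].
    + assert (Hm : (a + b) / 2 > c1 + r) by nra.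
      assert (L1 : c1 + r <= a).
      { destruct (Rle_or_lt (c1 + r) a) as [|H]; auto. exfalso.
        destruct (Rle_or_lt ((a + c1 + r) / 2) c1) as [H2|H2].
        - assert (K := Dx c1 ltac:(lra)). apply Sr in K. nra.
        - assert (K := Dx ((a + c1 + r) / 2) ltac:(lra)). apply Sr in K. nra. }
      exists b, (b + 1). split; [right; auto|]. split; [apply Sr; nra|]. split; [apply Sr; nra|right; lra].
    + assert (Hm : (a + b) / 2 < c1 - r) by nra.
      assert (L1 : b <= c1 - r).
      { destruct (Rle_or_lt b (c1 - r)) as [|H]; auto. exfalso.
        destruct (Rle_or_lt c1 ((b + c1 - r) / 2)) as [H2|H2].
        - assert (K := Dx c1 ltac:(lra)). apply Sr in K. nra.
        - assert (K := Dx ((b + c1 - r) / 2) ltac:(lra)). apply Sr in K. nra. }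
      exists a, (a - 1). split; [left; auto|]. split; [apply Sr; nra|]. split; [apply Sr; nra|left; lra].
Qed.



Lemma transfer : forall k P s rs (Q : R -> R -> Prop), length P = S k -> lead P <> 0 ->
  sorted_roots (peval P) k s -> sorted_roots (peval P) k rs ->
  (forall i, (S i < k)%nat -> Q (nth i s 0) (nth (S i) s 0)) ->
  forall i, (S i < k)%nat -> Q (nth i rs 0) (nth (S i) rs 0).
Proof.
  intros k P s rs Q HPl HL Hs Hrs HQ i Hi.
  assert (Ins : forall l, sorted_roots (peval P) k l -> forall x, peval P x = 0 -> In x l).
  { intros l Hl x Hx. pose proof Hl as [L1 [L2 L3]].
    rewrite (factor_real k P l HPl L1 (sorted_NoDup l k L1 L2) (roots_In _ k l Hl)) in Hx.
    apply rprod_zero. apply Rmult_integral in Hx as [Hx|Hx]; auto; contradiction. }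
  pose proof Hs as [S1 [S2 S3]]. pose proof Hrs as [R1 [R2 R3]].
  destruct (In_nth s (nth i rs 0) 0 (Ins s Hs _ (R3 i ltac:(lia)))) as [m [Hm Em]].
  destruct (In_nth s (nth (S i) rs 0) 0 (Ins s Hs _ (R3 (S i) ltac:(lia)))) as [n [Hn En]].
  assert (Hmn : (m < n)%nat).
  { apply (sorted_idx s k); try lia; auto. rewrite Em, En. apply R2; auto. }
  destruct (In_nth rs (nth (S m) s 0) 0 (Ins rs Hrs _ (S3 (S m) ltac:(lia)))) as [l [Hl El]].
  destruct (Nat.eq_dec n (S m)) as [->|Hne].
  - rewrite <- Em, <- En. apply HQ. lia.
  - exfalso.
    assert (A1 : nth i rs 0 < nth l rs 0).
    { rewrite El, <- Em. apply (sorted_lt s k); auto; lia. }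
    assert (A2 : nth l rs 0 < nth (S i) rs 0).
    { rewrite El, <- En. apply (sorted_lt s k); auto; lia. }
    apply (sorted_idx rs k) in A1; try lia; auto.
    apply (sorted_idx rs k) in A2; try lia; auto.
Qed.

Lemma bracket : forall xs k r n, ssorted xs k -> (S n < k)%nat -> nth 0 xs 0 <= r ->
  r <= nth (S n) xs 0 -> exists l, (l <= n)%nat /\ nth l xs 0 <= r <= nth (S l) xs 0.
Proof.
  intros xs k r n Hs. induction n as [|n IH]; intros Hn H0 H1.
  - exists 0%nat; split; [lia|lra].
  - destruct (Rle_or_lt r (nth (S n) xs 0)) as [H|H].
    + destruct (IH ltac:(lia) H0 H) as [l [Hl1 Hl2]]. exists l; split; [lia|auto].
    + exists (S n); split; [lia|lra].
Qed.

Lemma alt_from_loc : forall k p q xs alpha Pl u v m, alpha <> 0 ->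
  (forall x, peval Pl x = peval p x + alpha * peval q x) -> length xs = k -> ssorted xs k ->
  (forall x, peval p x = rprod x xs * lead p) -> lead p <> 0 ->
  peval Pl u = 0 -> peval Pl v = 0 -> (m < k)%nat ->
  (forall l, (l < m)%nat -> nth l xs 0 < u) -> (forall l, (m < l < k)%nat -> v < nth l xs 0) ->
  u < nth m xs 0 < v -> peval q u * peval q v < 0.
Proof.
  intros k p q xs alpha Pl u v m Ha HPl Hl Hs Hp HL Hu Hv Hm H1 H2 H3.
  assert (OB := OB_nth xs k m u v Hl Hs Hm H1 H2 H3).
  rewrite HPl in Hu, Hv.
  assert (Eu : peval q u = - peval p u / alpha) by (field_simplify_eq; auto; lra).
  assert (Ev : peval q v = - peval p v / alpha) by (field_simplify_eq; auto; lra).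
  rewrite Eu, Ev, !Hp.
  replace (- (rprod u xs * lead p) / alpha * (- (rprod v xs * lead p) / alpha)) with
    ((rprod u xs * rprod v xs) * (lead p * lead p / (alpha * alpha))) by (field; auto).
  assert (0 < lead p * lead p / (alpha * alpha)).
  { apply Rdiv_lt_0_compat; nra. }
  nra.
Qed.

Lemma construct : forall k p q xs alpha Pl, (2 <= k)%nat -> alpha <> 0 ->
  length Pl = S k -> lead Pl <> 0 ->
  (forall x, peval Pl x = peval p x + alpha * peval q x) ->
  length xs = k -> ssorted xs k -> (forall x, peval p x = rprod x xs * lead p) -> lead p <> 0 ->
  (forall i, (S i < k)%nat -> peval q (nth i xs 0) * peval q (nth (S i) xs 0) < 0) ->
  (forall i, (i < k)%nat -> peval q (nth i xs 0) <> 0) ->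
  exists s, sorted_roots (peval Pl) k s /\
    forall i, (S i < k)%nat -> peval q (nth i s 0) * peval q (nth (S i) s 0) < 0.
Proof.
  intros k p q xs alpha Pl Hk Ha HPl HL HPe Hxl Hxs Hp HpL A0 Qnz.
  assert (Px : forall i, (i < k)%nat -> peval Pl (nth i xs 0) = alpha * peval q (nth i xs 0)).
  { intros i Hi. rewrite HPe, Hp, (rprod_In _ xs); [ring|]. apply nth_In; lia. }
  assert (E1 : forall l, exists r, (S l < k)%nat ->
      nth l xs 0 < r < nth (S l) xs 0 /\ peval Pl r = 0).
  { intros l. destruct (Nat.lt_ge_cases (S l) k) as [Hl|Hl]; [|exists 0; intros; lia].
    destruct (ivt_sign (peval Pl) (nth l xs 0) (nth (S l) xs 0)) as [r [Hr1 Hr2]].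
    - apply continuity_peval.
    - apply Hxs; auto.
    - rewrite !Px by lia. specialize (A0 l Hl).
      replace (alpha * peval q (nth l xs 0) * (alpha * peval q (nth (S l) xs 0))) with
        ((alpha * alpha) * (peval q (nth l xs 0) * peval q (nth (S l) xs 0))) by ring.
      assert (0 < alpha * alpha) by nra. nra.
    - exists r; auto. }
  set (f := fun l => proj1_sig (constructive_indefinite_description _ (E1 l))).
  assert (Hf : forall l, (S l < k)%nat -> nth l xs 0 < f l < nth (S l) xs 0 /\ peval Pl (f l) = 0).
  { intros l Hl. unfold f. destruct (constructive_indefinite_description _ (E1 l)) as [r Hr]. simpl; auto. }
  set (s' := map f (seq 0 (k - 1))).
  assert (Ls' : length s' = (k - 1)%nat) by (unfold s'; rewrite length_map, length_seq; auto).
  assert (Ns' : forall l, (l < k - 1)%nat -> nth l s' 0 = f l).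
  { intros l Hl. unfold s'. rewrite nth_indep with (d' := f 0%nat) by (rewrite length_map, length_seq; auto).
    rewrite map_nth, seq_nth by auto. reflexivity. }
  assert (Ss' : ssorted s' (k - 1)).
  { intros i Hi. rewrite !Ns' by lia. pose proof (Hf i ltac:(lia)). pose proof (Hf (S i) ltac:(lia)). lra. }
  assert (Rs' : forall r, In r s' -> peval Pl r = 0).
  { intros r Hr. destruct (In_nth s' r 0 Hr) as [l [Hl <-]]. rewrite Ns' by lia. apply Hf; lia. }
  destruct (divide_roots (k - 1) 1 Pl s') as [g [Hg1 [Hg2 Hg3]]];
    [rewrite HPl; f_equal; lia|auto|apply (sorted_NoDup s' (k - 1)); auto|auto|].
  assert (Hgr : forall x, peval Pl x = rprod x s' * peval g x).
  { intros x. pose proof (Hg3 (RtoC x)) as E. rewrite pevalC_real, pevalC_real, cprod_real in E.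
    apply (f_equal re) in E. Cunf. lra. }
  destruct g as [|g0 [|g1 [|]]]; simpl in Hg1; try lia.
  assert (Eg1 : g1 = lead Pl) by (rewrite <- Hg2; reflexivity). rewrite <- Eg1 in HL.
  set (r := - g0 / g1).
  assert (Hgx : forall x, peval [g0; g1] x = g1 * (x - r)) by (intros; unfold r; simpl; field; auto).
  assert (Pr : peval Pl r = 0) by (rewrite Hgr, Hgx; ring).
  assert (Loc : r < nth 0 xs 0 \/ nth (k - 1) xs 0 < r).
  { destruct (Rlt_or_le r (nth 0 xs 0)) as [|H0]; [left; auto|].
    destruct (Rlt_or_le (nth (k - 1) xs 0) r) as [|H1]; [right; auto|]. exfalso.
    destruct (bracket xs k r (k - 2) Hxs ltac:(lia) H0 ltac:(replace (S (k - 2)) with (k - 1)%nat by lia; auto))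
      as [l [Hl [B1 B2]]].
    destruct (Req_dec r (nth l xs 0)) as [Er|Er].
    { rewrite Er, Px in Pr by lia. apply (Qnz l ltac:(lia)). apply Rmult_integral in Pr as [|]; auto; contradiction. }
    destruct (Req_dec r (nth (S l) xs 0)) as [Er'|Er'].
    { rewrite Er', Px in Pr by lia. apply (Qnz (S l) ltac:(lia)). apply Rmult_integral in Pr as [|]; auto; contradiction. }
    assert (OB : rprod (nth l xs 0) s' * rprod (nth (S l) xs 0) s' < 0).
    { apply (OB_nth s' (k - 1) l); auto; try lia.
      - intros l' Hl'. rewrite Ns' by lia. pose proof (Hf l' ltac:(lia)).
        pose proof (sorted_le xs k (S l') l Hxs ltac:(lia) ltac:(lia)). lra.
      - intros l' Hl'. rewrite Ns' by lia. pose proof (Hf l' ltac:(lia)).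
        pose proof (sorted_le xs k (S l) l' Hxs ltac:(lia) ltac:(lia)). lra.
      - rewrite Ns' by lia. apply Hf; lia. }
    assert (Prod : peval Pl (nth l xs 0) * peval Pl (nth (S l) xs 0) < 0).
    { rewrite !Px by lia. specialize (A0 l ltac:(lia)).
      replace (alpha * peval q (nth l xs 0) * (alpha * peval q (nth (S l) xs 0))) with
        ((alpha * alpha) * (peval q (nth l xs 0) * peval q (nth (S l) xs 0))) by ring.
      assert (0 < alpha * alpha) by nra. nra. }
    rewrite !Hgr, !Hgx in Prod.
    assert (G : (g1 * (nth l xs 0 - r)) * (g1 * (nth (S l) xs 0 - r)) < 0).
    { replace ((g1 * (nth l xs 0 - r)) * (g1 * (nth (S l) xs 0 - r))) with
        (- ((g1 * g1) * ((r - nth l xs 0) * (nth (S l) xs 0 - r)))) by ring.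
      assert (0 < g1 * g1) by nra. assert (0 < (r - nth l xs 0) * (nth (S l) xs 0 - r)) by
        (apply Rmult_lt_0_compat; lra). nra. }
    revert Prod OB G. generalize (rprod (nth l xs 0) s') (rprod (nth (S l) xs 0) s').
    generalize (g1 * (nth l xs 0 - r)) (g1 * (nth (S l) xs 0 - r)). intros; nra. }
  assert (Alt : forall u v m, peval Pl u = 0 -> peval Pl v = 0 -> (m < k)%nat ->
     (forall l, (l < m)%nat -> nth l xs 0 < u) -> (forall l, (m < l < k)%nat -> v < nth l xs 0) ->
     u < nth m xs 0 < v -> peval q u * peval q v < 0)
    by (intros; apply (alt_from_loc k p q xs alpha Pl u v m); auto).
  destruct Loc as [Lr|Lr].
  -
    exists (r :: s'). split; [split; [simpl; lia|split]|].
    + intros i Hi. destruct i as [|i].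
      * simpl. rewrite Ns' by lia. pose proof (Hf 0%nat ltac:(lia)). lra.
      * change (nth i s' 0 < nth (S i) s' 0). apply Ss'; lia.
    + intros i Hi. destruct i as [|i]; [exact Pr|]. simpl. rewrite Ns' by lia. apply Hf; lia.
    + intros i Hi. apply (Alt _ _ i); auto.
      * destruct i as [|i]; [exact Pr|]. simpl. rewrite Ns' by lia. apply Hf; lia.
      * simpl. rewrite Ns' by lia. apply Hf; lia.
      * lia.
      * intros l Hl. destruct i as [|i]; [lia|]. simpl. rewrite Ns' by lia.
        pose proof (Hf i ltac:(lia)). pose proof (sorted_le xs k l i Hxs ltac:(lia) ltac:(lia)). lra.
      * intros l Hl. simpl. rewrite Ns' by lia.
        pose proof (Hf i ltac:(lia)). pose proof (sorted_le xs k (S i) l Hxs ltac:(lia) ltac:(lia)). lra.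
      * simpl. rewrite (Ns' i) by lia. pose proof (Hf i ltac:(lia)). split; [|lra].
        destruct i as [|i]; [lra|]. rewrite Ns' by lia. pose proof (Hf i ltac:(lia)). lra.
  -
    assert (Nl : forall i, (i < k - 1)%nat -> nth i (s' ++ [r]) 0 = f i).
    { intros i Hi. rewrite app_nth1 by lia. apply Ns'; auto. }
    assert (Nr : nth (k - 1) (s' ++ [r]) 0 = r).
    { rewrite app_nth2 by lia. rewrite Ls'. replace (k - 1 - (k - 1))%nat with 0%nat by lia. reflexivity. }
    exists (s' ++ [r]). split; [split; [rewrite length_app; simpl; lia|split]|].
    + intros i Hi. rewrite Nl by lia. destruct (Nat.eq_dec (S i) (k - 1)) as [E|E].
      * rewrite E, Nr. pose proof (Hf i ltac:(lia)). replace (k - 1)%nat with (S i) in Lr by lia. lra.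
      * rewrite Nl by lia. pose proof (Hf i ltac:(lia)). pose proof (Hf (S i) ltac:(lia)). lra.
    + intros i Hi. destruct (Nat.eq_dec i (k - 1)) as [->|E]; [rewrite Nr; exact Pr|].
      rewrite Nl by lia. apply Hf; lia.
    + intros i Hi. rewrite (Nl i) by lia. apply (Alt _ _ (S i)); auto.
      * apply Hf; lia.
      * destruct (Nat.eq_dec (S i) (k - 1)) as [E|E]; [rewrite E, Nr; exact Pr|].
        rewrite Nl by lia. apply Hf; lia.
      * intros l Hl. pose proof (Hf i ltac:(lia)). pose proof (sorted_le xs k l i Hxs ltac:(lia) ltac:(lia)). lra.
      * intros l Hl. rewrite Nl by lia. pose proof (Hf (S i) ltac:(lia)).
        pose proof (sorted_le xs k (S (S i)) l Hxs ltac:(lia) ltac:(lia)). lra.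
      * pose proof (Hf i ltac:(lia)). split; [lra|].
        destruct (Nat.eq_dec (S i) (k - 1)) as [E|E].
        -- rewrite E, Nr. exact Lr.
        -- rewrite Nl by lia. apply Hf; lia.
Qed.



Lemma RtoC_inj : forall x y, Some (RtoC x) = Some (RtoC y) -> x = y.
Proof. intros x y H. injection H as H. exact H. Qed.

Theorem theorem2 (k : nat) (p q : rpoly) :
  (2 <= k)%nat ->
  has_degree p k -> has_degree q (k - 1) ->
  strictly_interlacing p q k ->
  forall alpha : R,
    (exists rs, sorted_roots (fun x => peval p x + alpha * peval q x) k rs) /\
    (forall rs, sorted_roots (fun x => peval p x + alpha * peval q x) k rs ->
       forall j, (S j < k)%nat ->
         maximal_real_univalent_disk (ratmap q p)
           (diam_disk (nth j rs 0) (nth (S j) rs 0))).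
Proof.
  intros Hk [Hpl HpL] [Hql HqL] [xs [ys [Hxs' [Hys' Hint]]]] alpha.
  pose proof Hxs' as [Lx [Sx Rx]]. pose proof Hys' as [Ly [Sy Ry]].
  assert (NDx : NoDup xs) by (apply (sorted_NoDup xs k); auto).
  assert (NDy : NoDup ys) by (apply (sorted_NoDup ys (k - 1)); auto).
  assert (Fpr : forall x, peval p x = rprod x xs * lead p)
    by (apply (factor_real k); auto; apply (roots_In _ k); auto).
  assert (Fqr : forall x, peval q x = rprod x ys * lead q)
    by (apply (factor_real (k - 1)); auto; apply (roots_In _ (k - 1)); auto).
  assert (A0 : forall i, (S i < k)%nat -> peval q (nth i xs 0) * peval q (nth (S i) xs 0) < 0).
  { intros i Hi. rewrite !Fqr.
    replace (rprod (nth i xs 0) ys * lead q * (rprod (nth (S i) xs 0) ys * lead q)) with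
      ((rprod (nth i xs 0) ys * rprod (nth (S i) xs 0) ys) * (lead q * lead q)) by ring.
    assert (0 < lead q * lead q) by nra.
    assert (rprod (nth i xs 0) ys * rprod (nth (S i) xs 0) ys < 0); [|nra].
    apply (OB_nth ys (k - 1) i); [exact Ly|exact Sy|lia| | |].
    - intros l Hl. pose proof (Hint l ltac:(lia)).
      pose proof (sorted_le xs k (S l) i Sx ltac:(lia) ltac:(lia)). lra.
    - intros l Hl. pose proof (Hint l ltac:(lia)).
      pose proof (sorted_le xs k (S i) l Sx ltac:(lia) ltac:(lia)). lra.
    - apply Hint; lia. }
  assert (Qnz : forall i, (i < k)%nat -> peval q (nth i xs 0) <> 0).
  { intros i Hi E. destruct (Nat.lt_ge_cases (S i) k) as [H|H].
    - pose proof (A0 i H). rewrite E in H0. lra.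
    - pose proof (A0 (i - 1)%nat ltac:(lia)). replace (S (i - 1)) with i in H0 by lia.
      rewrite E in H0. lra. }
  assert (NC : forall t, peval p t = 0 -> peval q t <> 0).
  { intros t Ht. rewrite Fpr in Ht. apply Rmult_integral in Ht as [Ht|Ht]; [|contradiction].
    apply rprod_zero in Ht. destruct (In_nth xs t 0 Ht) as [m [Hm <-]]. apply Qnz; lia. }
  set (Pl := padd p (pscale alpha q)).
  assert (HPe : forall x, peval Pl x = peval p x + alpha * peval q x)
    by (intros; unfold Pl; rewrite peval_padd, peval_pscale; ring).
  assert (HPC : forall z, pevalC Pl z = Cadd (pevalC p z) (Cmul (RtoC alpha) (pevalC q z)))
    by (intros; unfold Pl; rewrite pevalC_padd, pevalC_pscale; reflexivity).
  assert (HPlen : length Pl = S k)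
    by (unfold Pl; rewrite length_padd, length_pscale, Hpl, Hql; apply Nat.max_l; lia).
  assert (HPlead : lead Pl = lead p)
    by (unfold Pl; apply lead_padd; rewrite length_pscale; lia).
  assert (Ext : forall rs, sorted_roots (fun x => peval p x + alpha * peval q x) k rs <->
                           sorted_roots (peval Pl) k rs).
  { intros rs; split; apply sorted_roots_ext; intros; rewrite HPe; reflexivity. }
  assert (REF : exists s, sorted_roots (peval Pl) k s /\
    forall i, (S i < k)%nat -> peval q (nth i s 0) * peval q (nth (S i) s 0) < 0).
  { destruct (Req_dec alpha 0) as [Ha|Ha].
    - exists xs. split; auto. split; auto. split; auto. intros i Hi. rewrite HPe, Rx, Ha by auto. ring.
    - apply (construct k p q xs alpha Pl); auto; rewrite HPlead; auto. }
  destruct REF as [s [Hs Alts]].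
  split.
  - exists s. apply Ext; auto.
  - intros rs Hrs j Hj. apply Ext in Hrs.
    assert (Altr := transfer k Pl s rs (fun u v => peval q u * peval q v < 0) HPlen
                     ltac:(rewrite HPlead; auto) Hs Hrs Alts).
    simpl in Altr. pose proof Hrs as [Lr [Sr Rr]].
    assert (Hab : nth j rs 0 < nth (S j) rs 0) by (apply Sr; auto).
    split; [apply diam_real; auto|split].
    + intros [z1|] [z2|] D1 D2 E; simpl in D1, D2; try contradiction.
      f_equal. apply (core_inj k Pl q rs j z1 z2); auto.
      * rewrite HPlead; auto.
      * lia.
      * apply diam_iff; auto.
      * apply diam_iff; auto.
      * apply ratmap_cross in E. rewrite !HPC.
        revert E. generalize (pevalC q z1) (pevalC q z2) (pevalC p z1) (pevalC p z2).
        intros q1 q2 p1 p2 E.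
        transitivity (Cadd (Cmul q1 p2) (Cmul (RtoC alpha) (Cmul q1 q2)));
          [destruct q1, q2, p2; apply C_ext; Cunf; ring|].
        rewrite E. destruct q1, q2, p1; apply C_ext; Cunf; ring.
    + intros [SS [HSr [Hsub [Hx Hinj]]]].
      destruct (disk_cases _ _ SS Hab HSr Hsub Hx) as [e [t [He [Se [St Ht]]]]].
      assert (Pe : peval Pl e = 0) by (destruct He; subst; apply Rr; lia).
      destruct (Req_dec (peval Pl t) 0) as [Pt|Pt].
      * assert (Eq : ratmap q p (Some (RtoC t)) = ratmap q p (Some (RtoC e))).
        { apply cross_ratmap_real; auto. rewrite HPe in Pe, Pt.
          replace (peval p e) with (- alpha * peval q e) by lra.
          replace (peval p t) with (- alpha * peval q t) by lra. ring. }
        apply Hinj in Eq; auto. apply RtoC_inj in Eq. destruct He; subst; lra.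
      * destruct (core_ivt Pl q (nth j rs 0) (nth (S j) rs 0) t Hab (Rr j ltac:(lia))
           (Rr (S j) Hj) (Altr j Hj) Pt) as [x [Hxab Hxe]].
        assert (Eq : ratmap q p (Some (RtoC x)) = ratmap q p (Some (RtoC t))).
        { apply cross_ratmap_real; auto. rewrite !HPe in Hxe. lra. }
        apply Hinj in Eq; [|apply Hsub, diam_real_pt; auto|auto].
        apply RtoC_inj in Eq. lra.
Qed.
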